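(* Let $k\in\mathbb{Z}$ and let $p$ be a positive integer. Then $$\sum_{\nu=0}^{p}\binom{p}{\nu}\frac{E_{\nu}^{(k)}}{p-\nu+2}=\frac{1}{p+1}E_{p+1}^{(k)}(1)-\frac{1}{(p+1)(p+2)}E_{p+2}^{(k)}(1)+\frac{1}{(p+1)(p+2)}E_{p+2}^{(k)}.$$
   Context: For $k\in\mathbb{Z}$, $\mathrm{Ei}_k(x)=\sum_{n=1}^{\infty}\frac{x^n}{n^k(n-1)!}$; the poly-Genocchi polynomials $G_n^{(k)}(x)$ are defined by $\frac{2\,\mathrm{Ei}_k(\log(1+t))}{e^t+1}e^{xt}=\sum_{n=0}^{\infty}G_n^{(k)}(x)\frac{t^n}{n!}$; the poly-Euler polynomials are $E_n^{(k)}(x)=\frac{G_{n+1}^{(k)}(x)}{n+1}$ ($n\ge0$), and $E_n^{(k)}=E_n^{(k)}(0)$. *)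

(* Defs.v *)
From mathcomp Require Import all_boot all_order all_algebra.
Set Implicit Arguments. Unset Strict Implicit. Unset Printing Implicit Defensive.
Import Order.TTheory GRing.Theory Num.Theory.
Local Open Scope ring_scope.

Definition fps := nat -> rat.

Definition fps_mul (f g : fps) : fps :=
  fun n => \sum_(i < n.+1) f i * g (n - i)%N.

Definition fps_one : fps := fun n => if n == 0%N then 1 else 0.

Fixpoint fps_pow (f : fps) (m : nat) : fps :=
  if m is m'.+1 then fps_mul f (fps_pow f m') else fps_one.

(* composition f(g(t)) for g with zero constant term *)
Definition fps_comp (f g : fps) : fps :=
  fun n => \sum_(m < n.+1) f m * fps_pow g m n.

(* first n+1 coefficients of the multiplicative inverse of f (f 0 <> 0) *)
Fixpoint fps_inv_upto (f : fps) (n : nat) : seq rat :=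
  if n is n'.+1 then
    let s := fps_inv_upto f n' in
    rcons s (- (f 0%N)^-1 * \sum_(i < n) f i.+1 * nth 0 s (n' - i)%N)
  else [:: (f 0%N)^-1].

Definition fps_inv (f : fps) : fps := fun n => nth 0 (fps_inv_upto f n) n.

Definition fps_exp (x : rat) : fps := fun n => x ^+ n / (n`!)%:R.

Definition fps_log1p : fps :=
  fun n => if n == 0%N then 0 else (-1) ^+ n.+1 / n%:R.

Definition fps_Ei (k : int) : fps :=
  fun n => if n == 0%N then 0 else ((n%:R : rat) ^ k * (n.-1)`!%:R)^-1.

Definition genocchi_gf (k : int) (x : rat) : fps :=
  fps_mul (fun n => 2 * fps_comp (fps_Ei k) fps_log1p n)
          (fps_mul (fps_inv (fun n => fps_exp 1 n + fps_one n)) (fps_exp x)).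

Definition polyGenocchi (n : nat) (k : int) (x : rat) : rat :=
  (n`!)%:R * genocchi_gf k x n.

Definition polyEuler (n : nat) (k : int) (x : rat) : rat :=
  polyGenocchi n.+1 k x / (n.+1)%:R.

(* Main.v *)
Require Import Defs.
From mathcomp Require Import all_boot all_order all_algebra.
From mathcomp.algebra_tactics Require Import ring lra.
Import Order.TTheory GRing.Theory Num.Theory.
Local Open Scope ring_scope.

Lemma fps_mulA f g h n : fps_mul f (fps_mul g h) n = fps_mul (fps_mul f g) h n.
Proof.
rewrite /fps_mul.
under [RHS]eq_bigr => m _.
  rewrite mulr_suml (big_ord_widen n.+1 (fun i => f i * g (m - i)%N * h (n - m)%N) (ltn_ord m)) big_mkcond.
  over.
rewrite /= exchange_big /=.
apply: eq_bigr => i _.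
rewrite -big_mkcond /=.
under [RHS]eq_bigl => m do rewrite ltnS.
have -> : \sum_(m < n.+1 | (i <= m)%N) f i * g (m - i)%N * h (n - m)%N
   = \sum_(i <= m < n.+1) f i * g (m - i)%N * h (n - m)%N by rewrite big_geq_mkord.
have := big_addn 0 n.+1 i xpredT (fun m => f i * g (m - i)%N * h (n - m)%N).
rewrite add0n => ->.
rewrite subSn; last by rewrite -ltnS.
rewrite big_mkord mulr_sumr; apply: eq_bigr => j _.
rewrite addnK mulrA; congr (_ * h _). 
by rewrite addnC subnDA.
Qed.

Definition MM (k : int) : fps := fps_mul (fun n => 2 * fps_comp (fps_Ei k) fps_log1p n)
  (fps_inv (fun n => fps_exp 1 n + fps_one n)).

Lemma gfE k x n : genocchi_gf k x n = \sum_(i < n.+1) MM k i * (x ^+ (n - i) / (n - i)`!%:R).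
Proof. by rewrite /genocchi_gf fps_mulA. Qed.

Lemma MM0 k : MM k 0 = 0.
Proof. by rewrite /MM /fps_mul big_ord1 /fps_comp big_ord1 /fps_Ei /= !(mul0r, mulr0). Qed.

Lemma G0 k n : polyGenocchi n k 0 = n`!%:R * MM k n.
Proof.
rewrite /polyGenocchi gfE big_ord_recr /= big1 ?add0r.
  by rewrite subnn expr0 fact0 divr1 ?mulr1.
move=> i _; rewrite expr0n subn_eq0 leqNgt ltn_ord /= mul0r mulr0 //.
Qed.

Lemma fact_neq0 n : (n`!)%:R != 0 :> rat.
Proof. by rewrite pnatr_eq0 -lt0n fact_gt0. Qed.

Lemma E1 k n : polyEuler n k 1 = \sum_(i < n.+1) 'C(n, i)%:R * polyEuler i k 0.
Proof.
rewrite /polyEuler; under [RHS]eq_bigr => i _ do rewrite G0.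
rewrite /polyGenocchi gfE big_ord_recl MM0 mul0r add0r.
rewrite mulr_sumr mulr_suml; apply: eq_bigr => i _.
rewrite /= subSS expr1n.
have hi : (i <= n)%N by rewrite -ltnS.
have hf := bin_fact hi.
have e1 : (n.+1)`!%:R = (n.+1)%:R * n`!%:R :> rat by rewrite factS natrM.
have e2 : (i.+1)`!%:R = (i.+1)%:R * i`!%:R :> rat by rewrite factS natrM.
have e3 : n`!%:R = 'C(n, i)%:R * (i`!%:R * (n - i)`!%:R) :> rat by rewrite -hf !natrM.
rewrite e1 e2 e3.
have h1 := fact_neq0 i; have h2 := fact_neq0 (n - i).
have h3 : (n.+1)%:R != 0 :> rat by rewrite pnatr_eq0.
have h4 : (i.+1)%:R != 0 :> rat by rewrite pnatr_eq0.
rewrite /bump add1n. field. by rewrite -!(natrD _ 1) !add1n h2 h3 h4.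
Qed.

Lemma nzA (c x : rat) : 0 < c -> 0 <= x -> c + x != 0.
Proof. move=> h1 h2; apply: lt0r_neq0; lra. Qed.
Ltac nzg := first [ apply: mulf_neq0; nzg | apply: invr_neq0; nzg | apply: lt0r_neq0; lra ].
Ltac nz := repeat (apply/andP; split); nzg.

Lemma term (p i : nat) (e : rat) : (i <= p)%N ->
  'C(p, i)%:R * e / (p - i + 2)%N%:R =
  (p.+1%:R)^-1 * ('C(p.+1, i)%:R * e) - (p.+1%:R * p.+2%:R)^-1 * ('C(p.+2, i)%:R * e).
Proof.
move=> hi.
have hp0 := ler0n rat p; have hpd := ler0n rat (p - i).
have Ea := mul_bin_down p.+1 i; have Ec := mul_bin_down p.+2 i.
rewrite /= !subSn ?(leqW hi) // in Ea Ec *.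
move/(congr1 (fun m => m%:R : rat)): Ea; rewrite !natrM => Ea.
move/(congr1 (fun m => m%:R : rat)): Ec; rewrite !natrM => Ec.
rewrite addn2.
set d := (p - i)%N in Ea Ec *.
have h1 : p.+1%:R != 0 :> rat by rewrite pnatr_eq0.
have h2 : p.+2%:R != 0 :> rat by rewrite pnatr_eq0.
have h3 : d.+1%:R != 0 :> rat by rewrite pnatr_eq0.
have h4 : d.+2%:R != 0 :> rat by rewrite pnatr_eq0.
have -> : 'C(p, i)%:R = d.+1%:R * 'C(p.+1, i)%:R / p.+1%:R :> rat.
  by rewrite -Ea; field; nz.
have -> : 'C(p.+2, i)%:R = p.+2%:R * 'C(p.+1, i)%:R / d.+2%:R :> rat.
  by rewrite Ec; field; nz.
rewrite -[d.+2]addn1 -[d.+1]addn1 -[p.+2]addn1 -[p.+1]addn1 !natrD.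
field; nz.
Qed.

Theorem lemma9 (k : int) (p : nat) (hp : (0 < p)%N) :
  \sum_(nu < p.+1) ('C(p, nu))%:R * polyEuler nu k 0 / (p - nu + 2)%N%:R
  = ((p + 1)%N%:R)^-1 * polyEuler (p + 1) k 1
    - (((p + 1) * (p + 2))%N%:R)^-1 * polyEuler (p + 2) k 1
    + (((p + 1) * (p + 2))%N%:R)^-1 * polyEuler (p + 2) k 0.
Proof.
under eq_bigr => i _ do rewrite (@term p i (polyEuler i k 0) (ltnSE (ltn_ord i))).
rewrite big_split /= sumrN -!mulr_sumr !E1 !addn1 !addn2 natrM.
rewrite !big_ord_recr /= !binn !binSn.
set S1 := \sum_(i < p) _. set S2 := \sum_(i < p) _.
set e0 := polyEuler p k 0.
set e1 := polyEuler p.+1 k 0. set e2 := polyEuler p.+2 k 0.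
have hp0 := ler0n rat p.
field; nz.
Qed.
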